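(* Let $n$ be a positive even integer and let $f$ be a real polynomial of degree $d\le 5$. Then the Abel equation $$x'=t^{n-1}x^2+f(t)x^3,\qquad t\in[-1,1],$$ has a center at $x=0$ if and only if $f$ is an odd polynomial (i.e. contains only odd powers of $t$).
   Context: The Abel equation $x'=g(t)x^2+f(t)x^3$ on $[-1,1]$ (with $x$ real) is said to have a center at $x=0$ if every solution $x(t)$ whose initial value $x(-1)$ is small enough in absolute value is defined on $[-1,1]$ and satisfies $x(-1)=x(1)$. *)

(* Defs.v *)
From Stdlib Require Import Reals Lra Arith.
From Coquelicot Require Import Coquelicot.
Open Scope R_scope.

Definition poly_eval (a : nat -> R) (N : nat) (t : R) : R :=
  sum_f_R0 (fun i => a i * t ^ i) N.

Definition abel_solution (g f : R -> R) (phi : R -> R) : Prop :=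
  (forall t, -1 <= t <= 1 ->
     filterlim phi (within (fun u => -1 <= u <= 1) (locally t)) (locally (phi t)))
  /\ (forall t, -1 < t < 1 ->
     is_derive phi t (g t * phi t ^ 2 + f t * phi t ^ 3)).

Definition abel_center (g f : R -> R) : Prop :=
  exists eps : R, 0 < eps /\
    forall x0 : R, Rabs x0 < eps ->
      (exists phi, abel_solution g f phi /\ phi (-1) = x0) /\
      (forall phi, abel_solution g f phi -> phi (-1) = x0 -> phi 1 = x0).

(* Main.v *)
Require Import Defs.
From Stdlib Require Import Reals Arith.
From Coquelicot Require Import Coquelicot.
From Stdlib Require Import Lra Lia Psatz.
Open Scope R_scope.

Lemma ball_R (x e y : R) : ball x e y <-> Rabs (y - x) < e.
Proof. unfold ball; simpl; unfold AbsRing_ball, abs, minus, plus, opp; simpl. tauto. Qed.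

Definition clamp (t : R) : R := Rmax (-1) (Rmin 1 t).

Lemma clamp_in t : -1 <= clamp t <= 1.
Proof. unfold clamp, Rmax, Rmin; repeat destruct Rle_dec; lra. Qed.

Lemma clamp_id t : -1 <= t <= 1 -> clamp t = t.
Proof. intros; unfold clamp, Rmax, Rmin; repeat destruct Rle_dec; lra. Qed.

Lemma clamp_lip t u : Rabs (clamp t - clamp u) <= Rabs (t - u).
Proof.
  unfold clamp, Rmax, Rmin, Rabs; repeat destruct Rle_dec; repeat destruct Rcase_abs; lra.
Qed.

Lemma clamp_opp t : clamp (- t) = - clamp t.
Proof. unfold clamp, Rmax, Rmin; repeat destruct Rle_dec; lra. Qed.

Lemma lip_cont (f : R -> R) K : 0 <= K -> (forall x y, Rabs (f x - f y) <= K * Rabs (x - y)) ->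
  forall x, continuous f x.
Proof.
  intros HK Hf x. unfold continuous. apply filterlim_locally. intros eps.
  exists (mkposreal (eps / (K + 1)) ltac:(apply Rdiv_lt_0_compat; [apply cond_pos|lra])).
  intros y Hy. apply ball_R in Hy; simpl in Hy. apply ball_R.
  eapply Rle_lt_trans. apply Hf.
  apply Rle_lt_trans with (K * (eps / (K+1))).
  apply Rmult_le_compat_l. lra. pose proof (proj1 (ball_R _ _ _) Hy) as Hy2. simpl in Hy2. lra.
  destruct eps as [e He]; simpl in *.
  assert (K*(e/(K+1)) = e - e/(K+1)) by (field; lra).
  assert (0 < e/(K+1)) by (apply Rdiv_lt_0_compat; lra). lra.
Qed.

Definition Dint (u : R) : Prop := -1 <= u <= 1.

Lemma cont_clamp_of (phi : R -> R) :
  (forall t, -1 <= t <= 1 ->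
     filterlim phi (within (fun u => -1 <= u <= 1) (locally t)) (locally (phi t))) ->
  forall t, continuous (fun u => phi (clamp u)) t.
Proof.
  intros Hp t P HP.
  destruct (Hp (clamp t) (clamp_in t) P HP) as [eps He].
  exists eps. intros y Hy. apply He. 2: apply clamp_in.
  apply ball_R. apply ball_R in Hy. eapply Rle_lt_trans. apply clamp_lip. exact Hy.
Qed.

Lemma within_of_cont (phi : R -> R) :
  (forall t, continuous (fun u => phi (clamp u)) t) ->
  forall t, -1 <= t <= 1 ->
     filterlim phi (within (fun u => -1 <= u <= 1) (locally t)) (locally (phi t)).
Proof.
  intros Hc t Ht P HP.
  assert (E: phi (clamp t) = phi t) by (rewrite clamp_id; auto).
  pose proof (Hc t) as H. unfold continuous in H. rewrite E in H.
  destruct (H P HP) as [eps He]. exists eps. intros y Hy Dy.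
  pose proof (He y Hy) as H1. simpl in H1. rewrite clamp_id in H1; auto.
Qed.

Lemma mvt_open (u du : R -> R) a b : a < b -> (forall x, continuous u x) ->
  (forall x, a < x < b -> is_derive u x (du x)) ->
  exists c, a < c < b /\ u b - u a = du c * (b - a).
Proof.
  intros Hab Hc Hd.
  set (pr1 := fun c (P : a < c < b) => exist (fun l => derivable_pt_lim u c l) (du c)
                 (proj1 (is_derive_Reals _ _ _) (Hd c P))).
  set (pr2 := fun c (P : a < c < b) => derivable_pt_id c).
  destruct (MVT u id a b pr1 pr2 Hab) as [c [P E]].
  - intros; apply continuity_pt_filterlim, Hc.
  - intros; apply derivable_continuous_pt, derivable_pt_id.
  - exists c; split; auto. unfold pr1, pr2 in E. simpl in E.
    rewrite derive_pt_id in E. unfold id in E. lra.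
Qed.

Lemma mvt_bound (u du : R -> R) a b B : a <= b -> (forall x, continuous u x) ->
  (forall x, a < x < b -> is_derive u x (du x)) ->
  (forall x, a < x < b -> Rabs (du x) <= B) -> Rabs (u b - u a) <= B * (b - a).
Proof.
  intros Hab Hc Hd HB.
  destruct (Req_dec a b) as [E|E].
  - subst. rewrite !Rminus_diag, Rmult_0_r, Rabs_R0. lra.
  - destruct (mvt_open u du a b) as [c [Hc1 Hc2]]; auto. lra.
    rewrite Hc2, Rabs_mult, (Rabs_right (b - a)) by lra.
    apply Rmult_le_compat_r. lra. auto.
Qed.

Lemma mvt_nonincr (u du : R -> R) a b : a <= b -> (forall x, continuous u x) ->
  (forall x, a < x < b -> is_derive u x (du x)) ->
  (forall x, a < x < b -> du x <= 0) -> u b <= u a.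
Proof.
  intros Hab Hc Hd HB.
  destruct (Req_dec a b) as [E|E].
  - subst. lra.
  - destruct (mvt_open u du a b) as [c [Hc1 Hc2]]; auto. lra.
    assert (du c * (b - a) <= 0). { apply Rmult_le_0_r. auto. lra. }
    lra.
Qed.

Lemma locally_int x : -1 < x < 1 -> locally x (fun y => -1 < y < 1).
Proof.
  intros Hx.
  exists (mkposreal (Rmin (x + 1) (1 - x)) ltac:(apply Rmin_glb_lt; lra)).
  intros y Hy. pose proof (proj1 (ball_R _ _ _) Hy) as H. simpl in H.
  pose proof (Rmin_l (x+1) (1-x)). pose proof (Rmin_r (x+1) (1-x)).
  unfold Rabs in H; destruct Rcase_abs in H; lra.
Qed.

Lemma derive_clamp (phi : R -> R) x l : -1 < x < 1 -> is_derive phi x l ->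
  is_derive (fun u => phi (clamp u)) x l.
Proof.
  intros Hx Hd. apply is_derive_ext_loc with phi; auto.
  eapply filter_imp. 2: apply locally_int; eauto.
  intros y Hy. simpl. rewrite clamp_id; auto. lra.
Qed.

Definition sat (R0 y : R) : R := Rmax (- R0) (Rmin R0 y).

Lemma sat_bound R0 y : 0 <= R0 -> Rabs (sat R0 y) <= R0.
Proof. intros; unfold sat, Rmax, Rmin, Rabs; repeat destruct Rle_dec; repeat destruct Rcase_abs; lra. Qed.

Lemma sat_lip R0 y z : 0 <= R0 -> Rabs (sat R0 y - sat R0 z) <= Rabs (y - z).
Proof. intros; unfold sat, Rmax, Rmin, Rabs; repeat destruct Rle_dec; repeat destruct Rcase_abs; lra. Qed.

Lemma sat_id R0 y : Rabs y <= R0 -> sat R0 y = y.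
Proof. intros; unfold sat, Rmax, Rmin, Rabs in *; repeat destruct Rle_dec; repeat destruct Rcase_abs; lra. Qed.

Definition Nf (g f : R -> R) R0 t y :=
  g (clamp t) * (sat R0 y) ^ 2 + f (clamp t) * (sat R0 y) ^ 3.

Lemma abs_le_split x B : Rabs x <= B <-> -B <= x <= B.
Proof. unfold Rabs; destruct Rcase_abs; split; intros; lra. Qed.

Lemma N_bound g f Bg Bf R0 t y :
  (forall t, -1 <= t <= 1 -> Rabs (g t) <= Bg) ->
  (forall t, -1 <= t <= 1 -> Rabs (f t) <= Bf) -> 0 <= R0 ->
  Rabs (Nf g f R0 t y) <= Bg * R0 ^ 2 + Bf * R0 ^ 3.
Proof.
  intros Hg Hf HR. unfold Nf.
  pose proof (Hg _ (clamp_in t)) as G. pose proof (Hf _ (clamp_in t)) as F.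
  pose proof (sat_bound R0 y HR) as S.
  eapply Rle_trans. apply Rabs_triang.
  rewrite !Rabs_mult, <- !RPow_abs.
  apply Rplus_le_compat; apply Rmult_le_compat; try apply Rabs_pos; try apply pow_le; try apply Rabs_pos; auto;
  apply pow_incr; split; auto; apply Rabs_pos.
Qed.

Lemma N_lip g f Bg Bf R0 t y z :
  (forall t, -1 <= t <= 1 -> Rabs (g t) <= Bg) ->
  (forall t, -1 <= t <= 1 -> Rabs (f t) <= Bf) -> 0 <= R0 ->
  Rabs (Nf g f R0 t y - Nf g f R0 t z) <= (2 * Bg * R0 + 3 * Bf * R0 ^ 2) * Rabs (y - z).
Proof.
  intros Hg Hf HR. unfold Nf.
  pose proof (Hg _ (clamp_in t)) as G. pose proof (Hf _ (clamp_in t)) as F.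
  pose proof (sat_bound R0 y HR) as Sy. pose proof (sat_bound R0 z HR) as Sz.
  pose proof (sat_lip R0 y z HR) as Sl.
  set (a := sat R0 y) in *. set (b := sat R0 z) in *.
  set (gg := g (clamp t)) in *. set (ff := f (clamp t)) in *.
  replace (gg * a ^ 2 + ff * a ^ 3 - (gg * b ^ 2 + ff * b ^ 3))
    with ((a - b) * (gg * (a + b) + ff * (a * a + a * b + b * b))) by ring.
  rewrite Rabs_mult, Rmult_comm. apply Rmult_le_compat; try apply Rabs_pos; auto.
  eapply Rle_trans. apply Rabs_triang. rewrite !Rabs_mult.
  assert (Rabs (a + b) <= 2 * R0).
  { eapply Rle_trans. apply Rabs_triang. lra. }
  assert (Rabs (a * a + a * b + b * b) <= 3 * R0 ^ 2).
  { eapply Rle_trans. apply Rabs_triang. eapply Rle_trans. apply Rplus_le_compat_r. apply Rabs_triang.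
    rewrite !Rabs_mult.
    assert (Rabs a * Rabs a <= R0 * R0) by (apply Rmult_le_compat; auto; apply Rabs_pos).
    assert (Rabs a * Rabs b <= R0 * R0) by (apply Rmult_le_compat; auto; apply Rabs_pos).
    assert (Rabs b * Rabs b <= R0 * R0) by (apply Rmult_le_compat; auto; apply Rabs_pos).
    simpl; lra. }
  apply Rplus_le_compat.
  - replace (2 * Bg * R0) with (Bg * (2 * R0)) by ring.
    apply Rmult_le_compat; auto; apply Rabs_pos.
  - replace (3 * Bf * R0 ^ 2) with (Bf * (3 * R0 ^ 2)) by ring.
    apply Rmult_le_compat; auto; apply Rabs_pos.
Qed.

Lemma cont_pow (u : R -> R) k x : continuous u x -> continuous (fun t => u t ^ k) x.
Proof.
  intros H.
  assert (Hp : forall y : R, continuous (fun z : R => z ^ k) y).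
  { intro y. apply (ex_derive_continuous (fun z : R => z ^ k)).
    eexists. apply is_derive_pow. apply is_derive_id. }
  exact (continuous_comp u (fun z : R => z ^ k) x H (Hp (u x))).
Qed.

Lemma N_cont g f R0 (psi : R -> R) x : 0 <= R0 ->
  (forall t, continuous g t) -> (forall t, continuous f t) -> continuous psi x ->
  continuous (fun t => Nf g f R0 t (psi t)) x.
Proof.
  intros HR Hg Hf Hp. unfold Nf.
  assert (Cc : forall t, continuous clamp t).
  { apply lip_cont with 1. lra. intros; rewrite Rmult_1_l; apply clamp_lip. }
  assert (Cs : continuous (fun t => sat R0 (psi t)) x).
  { apply (continuous_comp psi (sat R0)); auto. apply lip_cont with 1. lra.
    intros; rewrite Rmult_1_l; apply sat_lip; auto. }
  apply (continuous_plus (fun t => g (clamp t) * sat R0 (psi t) ^ 2) (fun t => f (clamp t) * sat R0 (psi t) ^ 3)).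
  - apply (continuous_mult (fun t => g (clamp t)) (fun t => sat R0 (psi t) ^ 2)).
    apply (continuous_comp clamp g); auto. apply cont_pow; auto.
  - apply (continuous_mult (fun t => f (clamp t)) (fun t => sat R0 (psi t) ^ 3)).
    apply (continuous_comp clamp f); auto. apply cont_pow; auto.
Qed.

Lemma RInt_abs_bound (h : R -> R) a b M : (forall t, Rabs (h t) <= M) -> ex_RInt h a b ->
  Rabs (RInt h a b) <= M * Rabs (b - a).
Proof.
  intros Hh Hi. destruct (Rle_dec a b) as [Hab|Hab].
  - rewrite (Rabs_right (b - a)) by lra. rewrite Rmult_comm. apply abs_RInt_le_const; auto.
  - rewrite <- opp_RInt_swap by (apply ex_RInt_swap; auto). unfold opp; simpl.
    rewrite Rabs_Ropp, (Rabs_left (b - a)) by lra.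
    replace (- (b - a)) with (a - b) by ring. rewrite Rmult_comm.
    apply abs_RInt_le_const; auto. lra. apply ex_RInt_swap; auto.
Qed.

Lemma RInt_clamp_lip (h : R -> R) M : (forall t, Rabs (h t) <= M) -> (forall a b, ex_RInt h a b) ->
  forall t s, Rabs (RInt h (-1) (clamp t) - RInt h (-1) (clamp s)) <= M * Rabs (t - s).
Proof.
  intros Hh Hi t s.
  rewrite <- (RInt_Chasles h (-1) (clamp s) (clamp t)) by auto.
  unfold plus; simpl.
  rewrite Rplus_comm; unfold Rminus; rewrite Rplus_assoc, Rplus_opp_r, Rplus_0_r.
  eapply Rle_trans. apply RInt_abs_bound; auto.
  apply Rmult_le_compat_l. eapply Rle_trans. apply Rabs_pos. apply (Hh 0).
  apply clamp_lip.
Qed.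

Definition hh g f R0 (psi : R -> R) := fun t => Nf g f R0 t (psi t).
Definition Tm g f R0 x0 (psi : R -> R) := fun t => x0 + RInt (hh g f R0 psi) (-1) (clamp t).
Fixpoint pic g f R0 x0 (k : nat) : R -> R :=
  match k with O => fun _ => x0 | S k => Tm g f R0 x0 (pic g f R0 x0 k) end.

Lemma Rplus_minus_l' a b c : a + b - (a + c) = b - c.
Proof. ring. Qed.
Lemma Rplus_minus_l2 a b : a + b - a = b.
Proof. ring. Qed.

Lemma RInt_minus_R (f g : R -> R) a b : ex_RInt f a b -> ex_RInt g a b ->
  RInt f a b - RInt g a b = RInt (fun x => f x - g x) a b.
Proof. intros. symmetry. etransitivity. apply (RInt_minus f g a b); auto. reflexivity. Qed.

Lemma clamp_len t : Rabs (clamp t - -1) <= 2.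
Proof. pose proof (clamp_in t). rewrite Rabs_right; lra. Qed.

Lemma is_derive_val (f : R -> R) x l l' : is_derive f x l -> l = l' -> is_derive f x l'.
Proof. intros; subst; auto. Qed.

Theorem existence (g f : R -> R) Bg Bf x0 R0 M L :
  (forall t, continuous g t) -> (forall t, continuous f t) ->
  (forall t, -1 <= t <= 1 -> Rabs (g t) <= Bg) ->
  (forall t, -1 <= t <= 1 -> Rabs (f t) <= Bf) ->
  R0 = 2 * Rabs x0 -> M = Bg * R0 ^ 2 + Bf * R0 ^ 3 -> L = 2 * Bg * R0 + 3 * Bf * R0 ^ 2 ->
  4 * L <= 1 -> 2 * M <= Rabs x0 ->
  exists psi, abel_solution g f psi /\ psi (-1) = x0 /\ (forall t, Rabs (psi t - x0) <= 2 * M).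
Proof.
  intros Cg Cf Hg Hf ER0 EM EL HL HM.
  assert (HR0: 0 <= R0) by (rewrite ER0; pose proof (Rabs_pos x0); lra).
  assert (Bg0: 0 <= Bg) by (eapply Rle_trans; [apply Rabs_pos| apply (Hg 0); lra]).
  assert (Bf0: 0 <= Bf) by (eapply Rle_trans; [apply Rabs_pos| apply (Hf 0); lra]).
  assert (M0: 0 <= M) by (rewrite EM; apply Rplus_le_le_0_compat; apply Rmult_le_pos; auto; apply pow_le; auto).
  assert (L0: 0 <= L) by (rewrite EL; apply Rplus_le_le_0_compat; repeat apply Rmult_le_pos; auto; try lra; apply pow_le; auto).
  assert (hb: forall psi t, Rabs (hh g f R0 psi t) <= M) by (intros; unfold hh; rewrite EM; apply N_bound; auto).
  assert (hl: forall p1 p2 t, Rabs (hh g f R0 p1 t - hh g f R0 p2 t) <= L * Rabs (p1 t - p2 t))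
    by (intros; unfold hh; rewrite EL; apply N_lip; auto).
  assert (hc: forall psi, (forall t, continuous psi t) -> forall t, continuous (hh g f R0 psi) t)
    by (intros; unfold hh; apply N_cont; auto).
  assert (hi: forall psi, (forall t, continuous psi t) -> forall a b, ex_RInt (hh g f R0 psi) a b)
    by (intros; apply (ex_RInt_continuous (V := R_CompleteNormedModule)); intros; apply hc; auto).
  assert (Tc: forall psi, (forall t, continuous psi t) -> forall t, continuous (Tm g f R0 x0 psi) t).
  { intros psi Hp. apply lip_cont with M; auto. intros x y. unfold Tm.
    rewrite Rplus_minus_l'. apply RInt_clamp_lip; auto. }
  set (P := pic g f R0 x0).
  assert (PS: forall k t, P (S k) t = x0 + RInt (hh g f R0 (P k)) (-1) (clamp t)) by reflexivity.
  assert (Pc: forall k t, continuous (P k) t).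
  { induction k; intros t. apply continuous_const. apply Tc; auto. }
  assert (Pd: forall k t, Rabs (P (S k) t - P k t) <= 2 * M * (1/2) ^ k).
  { induction k; intros t.
    - rewrite PS. simpl (P O t). rewrite Rplus_minus_l2.
      eapply Rle_trans. apply RInt_abs_bound. auto. apply hi; intros; apply continuous_const.
      pose proof (clamp_len t). simpl. nra.
    - rewrite !PS, Rplus_minus_l', RInt_minus_R by (apply hi; auto).
      eapply Rle_trans. apply RInt_abs_bound with (M := L * (2 * M * (1/2)^k)).
      + intros s. eapply Rle_trans. apply hl. apply Rmult_le_compat_l; auto.
      + apply (ex_RInt_minus (V := R_NormedModule) (hh g f R0 (P (S k))) (hh g f R0 (P k))); apply hi; auto.
      + pose proof (clamp_len t).
        assert (0 <= M * (1/2)^k) by (apply Rmult_le_pos; auto; apply pow_le; lra).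
        simpl. set (q := (1/2)^k) in *.
        apply Rle_trans with (L * (2 * M * q) * 2).
        apply Rmult_le_compat_l. apply Rmult_le_pos; auto; lra. auto.
        nra. }
  assert (Hq: forall k, 0 < (1/2)^k) by (intros; apply pow_lt; lra).
  assert (Pm: forall m k t, Rabs (P (m + k)%nat t - P k t) <= 4 * M * (1/2)^k - 4 * M * (1/2)^(m+k)).
  { induction m; intros k t.
    - simpl. rewrite Rminus_diag, Rabs_R0. lra.
    - replace (P (S m + k)%nat t - P k t) with ((P (S (m+k)) t - P (m + k)%nat t) + (P (m+k)%nat t - P k t)) by (simpl; ring).
      eapply Rle_trans. apply Rabs_triang. pose proof (Pd (m+k)%nat t). pose proof (IHm k t).
      simpl ((1/2)^(S m + k)). lra. }
  assert (Pm': forall m k t, Rabs (P (m + k)%nat t - P k t) <= 4 * M * (1/2)^k).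
  { intros. eapply Rle_trans. apply Pm. pose proof (Hq (m+k)%nat).
    assert (0 <= M * (1/2)^(m+k)) by (apply Rmult_le_pos; lra). lra. }
  assert (Cauchy: forall t, ex_finite_lim_seq (fun k => P k t)).
  { intros t. apply ex_lim_seq_cauchy_corr. intros eps.
    destruct (pow_lt_1_zero (1/2) ltac:(rewrite Rabs_right; lra) (eps / (8*M+1))) as [N HN].
    { apply Rdiv_lt_0_compat; [apply cond_pos|lra]. }
    exists N. intros n m Hn Hm.
    replace (P n t - P m t) with ((P ((n - N) + N)%nat t - P N t) - (P ((m - N) + N)%nat t - P N t))
      by (replace ((n - N) + N)%nat with n by lia; replace ((m - N) + N)%nat with m by lia; ring).
    eapply Rle_lt_trans. apply Rabs_triang. rewrite Rabs_Ropp.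
    pose proof (Pm' (n - N)%nat N t). pose proof (Pm' (m - N)%nat N t).
    specialize (HN N (le_n N)). rewrite Rabs_right in HN by (left; apply Hq).
    destruct eps as [e He]. simpl in *.
    assert ((8*M+1) * (1/2)^N < e).
    { apply Rmult_lt_reg_r with (/ (8*M+1)). apply Rinv_0_lt_compat; lra.
      rewrite Rmult_comm, <- Rmult_assoc, Rinv_l, Rmult_1_l by lra. exact HN. }
    pose proof (Hq N). nra. }
  set (psi := fun t => real (Lim_seq (fun k => P k t))).
  assert (Hl: forall t, is_lim_seq (fun k => P k t) (psi t)).
  { intros t. unfold psi. destruct (Cauchy t) as [l Hl']. rewrite (is_lim_seq_unique _ _ Hl'). simpl. auto. }
  assert (Hb: forall k t, Rabs (psi t - P k t) <= 4 * M * (1/2)^k).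
  { intros k t. pose proof (proj1 (is_lim_seq_incr_n _ k _) (Hl t)) as H. simpl in H.
    apply abs_le_split. split.
    - assert (Rbar_le (P k t - 4 * M * (1/2)^k) (psi t)).
      { apply (is_lim_seq_le (fun _ => P k t - 4 * M * (1/2)^k) (fun n => P (n + k)%nat t)); auto.
        intros n. pose proof (Pm' n k t). apply abs_le_split in H0. lra. apply is_lim_seq_const. }
      simpl in H0. lra.
    - assert (Rbar_le (psi t) (P k t + 4 * M * (1/2)^k)).
      { apply (is_lim_seq_le (fun n => P (n + k)%nat t) (fun _ => P k t + 4 * M * (1/2)^k)); auto.
        intros n. pose proof (Pm' n k t). apply abs_le_split in H0. lra. apply is_lim_seq_const. }
      simpl in H0. lra. }
  assert (Hint: forall a b, ex_RInt (hh g f R0 psi) a b /\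
     is_lim_seq (fun k => RInt (hh g f R0 (P k)) a b) (RInt (hh g f R0 psi) a b)).
  { intros a b.
    destruct (filterlim_RInt (V := R_CompleteNormedModule) (fun k => hh g f R0 (P k)) a b eventually eventually_filter
       (hh g f R0 psi) (fun k => RInt (hh g f R0 (P k)) a b)) as [If [H1 H2]].
    - intros k. apply (RInt_correct (V := R_CompleteNormedModule)). apply hi; auto.
    - intros Q [eps HQ].
      destruct (pow_lt_1_zero (1/2) ltac:(rewrite Rabs_right; lra) (eps / (4*L*M+1))) as [N HN].
      { apply Rdiv_lt_0_compat; [apply cond_pos|]. assert (0 <= L*M) by (apply Rmult_le_pos; auto). lra. }
      exists N. intros k Hk. apply HQ. intros t. apply ball_R.
      eapply Rle_lt_trans. apply hl. rewrite <- Rabs_Ropp, Ropp_minus_distr.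
      eapply Rle_lt_trans. apply Rmult_le_compat_l. auto. apply Hb.
      specialize (HN k Hk). rewrite Rabs_right in HN by (left; apply Hq).
      destruct eps as [e He]. simpl in *.
      assert ((4*L*M+1) * (1/2)^k < e).
      { assert (0 <= L*M) by (apply Rmult_le_pos; auto).
        apply Rmult_lt_reg_r with (/ (4*L*M+1)). apply Rinv_0_lt_compat; lra.
        rewrite Rmult_comm, <- Rmult_assoc, Rinv_l, Rmult_1_l by lra. exact HN. }
      pose proof (Hq k). assert (0 <= L*M) by (apply Rmult_le_pos; auto). nra.
    - split. exists If; auto. rewrite (is_RInt_unique _ _ _ _ H2). exact H1. }
  assert (Hfix: forall t, psi t = x0 + RInt (hh g f R0 psi) (-1) (clamp t)).
  { intros t. assert (A1: is_lim_seq (fun k => P (S k) t) (psi t)).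
    { apply (is_lim_seq_incr_1 (fun k => P k t)); auto. }
    assert (A2: is_lim_seq (fun k => P (S k) t) (x0 + RInt (hh g f R0 psi) (-1) (clamp t))).
    { apply is_lim_seq_ext with (fun k => x0 + RInt (hh g f R0 (P k)) (-1) (clamp t)).
      intros; symmetry; apply PS.
      apply is_lim_seq_plus'. apply is_lim_seq_const. apply Hint. }
    pose proof (is_lim_seq_unique _ _ A1) as E1. pose proof (is_lim_seq_unique _ _ A2) as E2.
    rewrite E1 in E2. injection E2. auto. }
  assert (Hpi: forall a b, ex_RInt (hh g f R0 psi) a b) by (intros; apply Hint).
  assert (Cpsi: forall t, continuous psi t).
  { apply lip_cont with M; auto. intros x y. rewrite (Hfix x), (Hfix y), Rplus_minus_l'.
    apply RInt_clamp_lip; auto. }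
  assert (Bpsi: forall t, Rabs (psi t - x0) <= 2 * M).
  { intros t. rewrite Hfix. rewrite Rplus_comm; unfold Rminus; rewrite Rplus_assoc, Rplus_opp_r, Rplus_0_r.
    eapply Rle_trans. apply RInt_abs_bound; auto. pose proof (clamp_len t). nra. }
  assert (Cc : forall t, continuous clamp t).
  { apply lip_cont with 1. lra. intros; rewrite Rmult_1_l; apply clamp_lip. }
  exists psi. split; [|split].
  - split.
    + apply within_of_cont. intros t. apply (continuous_comp clamp psi); auto.
    + intros t Ht.
      assert (Sat: sat R0 (psi t) = psi t).
      { apply sat_id. pose proof (Bpsi t). apply abs_le_split in H. apply abs_le_split.
        pose proof (Rabs_pos x0). unfold Rabs in *. destruct Rcase_abs; lra. }
      assert (D1: is_derive (fun u => RInt (hh g f R0 psi) (-1) u) t (hh g f R0 psi t)).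
      { apply (is_derive_RInt (hh g f R0 psi) (fun u => RInt (hh g f R0 psi) (-1) u) (-1) t).
        apply filter_forall. intros; apply (RInt_correct (V := R_CompleteNormedModule)); auto.
        apply hc; auto. }
      assert (D2: is_derive psi t (hh g f R0 psi t)).
      { apply is_derive_ext_loc with (fun u => x0 + RInt (hh g f R0 psi) (-1) u).
        eapply filter_imp. 2: apply locally_int; lra.
        intros y Hy. simpl. rewrite (Hfix y), clamp_id; auto. lra.
        pose proof (is_derive_plus (fun _ => x0) _ t 0 _ (is_derive_const x0 t) D1) as D3.
        eapply is_derive_val. exact D3. simpl. apply Rplus_0_l. }
      unfold hh, Nf in D2. rewrite clamp_id, Sat in D2 by lra. exact D2.
  - rewrite Hfix. rewrite clamp_id by lra. rewrite RInt_point. unfold zero; simpl; ring.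
  - exact Bpsi.
Qed.

Lemma cubic_bound a b K G F Bg Bf : Rabs a <= K -> Rabs b <= K -> Rabs G <= Bg -> Rabs F <= Bf ->
  Rabs (G * (a + b) + F * (a * a + a * b + b * b)) <= 2 * Bg * K + 3 * Bf * K ^ 2.
Proof.
  intros Ha Hb HG HF.
  assert (K0 : 0 <= K) by (eapply Rle_trans; [apply Rabs_pos|apply Ha]).
  eapply Rle_trans. apply Rabs_triang. rewrite !Rabs_mult.
  assert (Rabs (a + b) <= 2 * K).
  { eapply Rle_trans. apply Rabs_triang. lra. }
  assert (Rabs (a * a + a * b + b * b) <= 3 * K ^ 2).
  { eapply Rle_trans. apply Rabs_triang. eapply Rle_trans. apply Rplus_le_compat_r. apply Rabs_triang.
    rewrite !Rabs_mult.
    assert (Rabs a * Rabs a <= K * K) by (apply Rmult_le_compat; auto; apply Rabs_pos).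
    assert (Rabs a * Rabs b <= K * K) by (apply Rmult_le_compat; auto; apply Rabs_pos).
    assert (Rabs b * Rabs b <= K * K) by (apply Rmult_le_compat; auto; apply Rabs_pos).
    simpl; lra. }
  apply Rplus_le_compat.
  - replace (2 * Bg * K) with (Bg * (2 * K)) by ring.
    apply Rmult_le_compat; auto; apply Rabs_pos.
  - replace (3 * Bf * K ^ 2) with (Bf * (3 * K ^ 2)) by ring.
    apply Rmult_le_compat; auto; apply Rabs_pos.
Qed.

Lemma cont_Rabs x : continuous Rabs x.
Proof. apply lip_cont with 1. lra. intros; rewrite Rmult_1_l; apply Rabs_triang_inv2. Qed.

Lemma sol_bound g f phi : abel_solution g f phi ->
  exists K, 0 <= K /\ forall t, -1 <= t <= 1 -> Rabs (phi t) <= K.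
Proof.
  intros [Hc _]. pose proof (cont_clamp_of phi Hc) as Cu.
  destruct (continuity_ab_maj (fun t => Rabs (phi (clamp t))) (-1) 1) as [Mx [H1 H2]]. lra.
  { intros c _. apply continuity_pt_filterlim.
    apply (continuous_comp (fun t => phi (clamp t)) Rabs); auto. apply cont_Rabs. }
  exists (Rabs (phi (clamp Mx))). split. apply Rabs_pos.
  intros t Ht. rewrite <- (clamp_id t) at 1 by auto. apply H1; auto.
Qed.

Lemma uniq01 g f Bg Bf phi1 phi2 :
  (forall t, -1 <= t <= 1 -> Rabs (g t) <= Bg) ->
  (forall t, -1 <= t <= 1 -> Rabs (f t) <= Bf) ->
  abel_solution g f phi1 -> abel_solution g f phi2 -> phi1 0 = phi2 0 -> phi1 1 = phi2 1.
Proof.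
  intros Hg Hf S1 S2 E0.
  destruct (sol_bound g f phi1 S1) as [K1 [K10 HK1]].
  destruct (sol_bound g f phi2 S2) as [K2 [K20 HK2]].
  set (K := Rmax K1 K2).
  set (L := 2 * Bg * K + 3 * Bf * K ^ 2).
  destruct S1 as [C1 D1]. destruct S2 as [C2 D2].
  set (u1 := fun t => phi1 (clamp t)). set (u2 := fun t => phi2 (clamp t)).
  assert (Cu1 : forall t, continuous u1 t) by (apply cont_clamp_of; auto).
  assert (Cu2 : forall t, continuous u2 t) by (apply cont_clamp_of; auto).
  set (dv1 := fun t => g t * phi1 t ^ 2 + f t * phi1 t ^ 3).
  set (dv2 := fun t => g t * phi2 t ^ 2 + f t * phi2 t ^ 3).
  set (e := fun t => (u1 t - u2 t) ^ 2 * exp (-2 * L * t)).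
  set (de := fun t => INR 2 * (dv1 t - dv2 t) * (u1 t - u2 t) ^ 1 * exp (-2 * L * t)
                      + (u1 t - u2 t) ^ 2 * (exp (-2 * L * t) * (-2 * L))).
  assert (Hle : e 1 <= e 0).
  { apply mvt_nonincr with de. lra.
    - intros x. unfold e.
      apply (continuous_mult (fun t => (u1 t - u2 t) ^ 2) (fun t => exp (-2 * L * t))).
      apply cont_pow. exact (continuous_minus (K := R_AbsRing) (V := R_NormedModule) u1 u2 x (Cu1 x) (Cu2 x)).
      apply (ex_derive_continuous (K := R_AbsRing) (V := R_NormedModule) (fun t => exp (-2 * L * t))). auto_derive. auto.
    - intros x Hx.
      assert (Hx' : -1 < x < 1) by lra.
      assert (Du1 : is_derive u1 x (dv1 x)) by (apply derive_clamp; auto).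
      assert (Du2 : is_derive u2 x (dv2 x)) by (apply derive_clamp; auto).
      assert (Dd : is_derive (fun t => u1 t - u2 t) x (dv1 x - dv2 x)) by (apply (is_derive_minus u1 u2); auto).
      assert (Dp : is_derive (fun t => (u1 t - u2 t) ^ 2) x (INR 2 * (dv1 x - dv2 x) * (u1 x - u2 x) ^ 1))
        by (apply (is_derive_pow (fun t => u1 t - u2 t)); auto).
      assert (Dx : is_derive (fun t => exp (-2 * L * t)) x (exp (-2 * L * x) * (-2 * L)))
        by (auto_derive; auto; ring).
      pose proof (is_derive_mult _ _ x _ _ Dp Dx) as Dm.
      eapply is_derive_val. apply Dm. intros; apply Rmult_comm. reflexivity.
    - intros x Hx. unfold de.
      assert (Hx' : -1 <= x <= 1) by lra.
      unfold u1, u2, dv1, dv2. rewrite clamp_id by auto.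
      set (k := g x * (phi1 x + phi2 x) + f x * (phi1 x * phi1 x + phi1 x * phi2 x + phi2 x * phi2 x)).
      assert (Hk : Rabs k <= L).
      { apply cubic_bound; auto.
        eapply Rle_trans. apply HK1; auto. apply Rmax_l.
        eapply Rle_trans. apply HK2; auto. apply Rmax_r. }
      replace (INR 2 * (g x * phi1 x ^ 2 + f x * phi1 x ^ 3 - (g x * phi2 x ^ 2 + f x * phi2 x ^ 3)) *
          (phi1 x - phi2 x) ^ 1 * exp (-2 * L * x) + (phi1 x - phi2 x) ^ 2 * (exp (-2 * L * x) * (-2 * L)))
        with (2 * exp (-2 * L * x) * (phi1 x - phi2 x) ^ 2 * (k - L)) by (unfold k; simpl; ring).
      assert (0 <= 2 * exp (-2 * L * x) * (phi1 x - phi2 x) ^ 2).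
      { apply Rmult_le_pos. pose proof (exp_pos (-2 * L * x)); lra. apply pow2_ge_0. }
      apply abs_le_split in Hk. nra. }
  unfold e, u1, u2 in Hle. rewrite !clamp_id in Hle by lra. rewrite E0, Rminus_diag in Hle.
  pose proof (exp_pos (-2 * L * 1)).
  assert ((phi1 1 - phi2 1) ^ 2 <= 0).
  { simpl in Hle. nra. }
  assert ((phi1 1 - phi2 1) ^ 2 = 0) by (pose proof (pow2_ge_0 (phi1 1 - phi2 1)); lra).
  simpl in H1. assert (phi1 1 - phi2 1 = 0) by nra. lra.
Qed.

Lemma sym_sol g f phi : (forall t, g (- t) = - g t) -> (forall t, f (- t) = - f t) ->
  abel_solution g f phi -> abel_solution g f (fun t => phi (- t)).
Proof.
  intros Hg Hf [C D]. split.
  - apply within_of_cont. intros t. pose proof (cont_clamp_of phi C) as Cu.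
    apply continuous_ext with (fun u => phi (clamp (- u))).
    intros; rewrite clamp_opp; reflexivity.
    apply (continuous_comp (fun u => - u) (fun v => phi (clamp v))); auto.
    apply lip_cont with 1. lra. intros. rewrite Rmult_1_l.
    replace (- x - - y) with (- (x - y)) by ring. rewrite Rabs_Ropp. lra.
  - intros t Ht. assert (Ht' : -1 < - t < 1) by lra.
    pose proof (D (- t) Ht') as Dp.
    assert (Dn : is_derive (fun u : R => - u) t (-1)) by (auto_derive; auto; ring).
    pose proof (is_derive_comp phi (fun u => - u) t _ _ Dp Dn) as Dc.
    eapply is_derive_val. apply Dc.
    unfold scal; simpl; unfold mult; simpl. rewrite Hg, Hf. ring.
Qed.

Definition Asum (a : nat -> R) : R := sum_f_R0 (fun i => Rabs (a i)) 5.

Lemma Asum_pos a : 0 <= Asum a.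
Proof. unfold Asum. apply cond_pos_sum. intros; apply Rabs_pos. Qed.

Lemma pow_abs_le1 t k : Rabs t <= 1 -> Rabs (t ^ k) <= 1.
Proof.
  intros H. rewrite <- RPow_abs. induction k. simpl; lra.
  simpl. pose proof (Rabs_pos t). assert (0 <= Rabs t ^ k) by (apply pow_le; auto). nra.
Qed.

Lemma f_bound a t : -1 <= t <= 1 -> Rabs (poly_eval a 5 t) <= Asum a.
Proof.
  intros Ht. unfold poly_eval, Asum. eapply Rle_trans. apply sum_f_R0_triangle.
  apply sum_Rle. intros i _. rewrite Rabs_mult.
  assert (Rabs (t ^ i) <= 1) by (apply pow_abs_le1; unfold Rabs; destruct Rcase_abs; lra).
  pose proof (Rabs_pos (a i)). pose proof (Rabs_pos (t ^ i)). nra.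
Qed.

Lemma g_bound n t : -1 <= t <= 1 -> Rabs (t ^ n) <= 1.
Proof. intros; apply pow_abs_le1; unfold Rabs; destruct Rcase_abs; lra. Qed.

Lemma poly_cont a t : continuous (poly_eval a 5) t.
Proof.
  apply (ex_derive_continuous (K := R_AbsRing) (V := R_NormedModule)).
  unfold poly_eval; simpl. auto_derive. auto.
Qed.

Lemma pow_cont k t : continuous (fun t => t ^ k) t.
Proof.
  apply (ex_derive_continuous (K := R_AbsRing) (V := R_NormedModule) (fun t => t ^ k)).
  auto_derive. auto.
Qed.

Lemma exist_spec n a x0 : Rabs x0 * (1 + Asum a) <= 1/64 ->
  exists psi, abel_solution (fun t => t ^ (n - 1)) (poly_eval a 5) psi /\ psi (-1) = x0 /\
    (forall t, Rabs (psi t - x0) <= 9 * x0 ^ 2).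
Proof.
  intros Hx. pose proof (Asum_pos a) as A0. set (A := Asum a) in *.
  set (r := Rabs x0). pose proof (Rabs_pos x0) as r0. fold r in r0.
  assert (r6 : 0 <= A * r) by (apply Rmult_le_pos; auto).
  assert (Hx' : r * (1 + A) <= 1/64) by (unfold r; auto).
  assert (r1 : r <= 1/64) by lra. assert (r2 : A * r <= 1/64) by lra.
  assert (r3 : A * r * r <= 1/64 * r) by nra.
  assert (r4 : A * r * r * r <= 1/64 * r * r) by nra.
  assert (r5 : r * r <= 1/64 * r) by nra.
  destruct (existence (fun t => t ^ (n - 1)) (poly_eval a 5) 1 A x0 (2 * r)
     (1 * (2 * r) ^ 2 + A * (2 * r) ^ 3) (2 * 1 * (2 * r) + 3 * A * (2 * r) ^ 2)) as [psi [S [E B]]]; auto.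
  - intros; apply pow_cont.
  - intros; apply poly_cont.
  - intros; apply g_bound; auto.
  - intros; apply f_bound; auto.
  - simpl. lra.
  - fold r. simpl. lra.
  - exists psi. split; auto. split; auto. intros t. eapply Rle_trans. apply B.
    assert (x0 ^ 2 = r ^ 2) by (unfold r; rewrite pow2_abs; reflexivity).
    rewrite H. simpl. nra.
Qed.

Lemma odd_pow_opp k t : Nat.Odd k -> (- t) ^ k = - t ^ k.
Proof.
  intros [m ->]. replace (- t) with (-1 * t) by ring. rewrite Rpow_mult_distr.
  replace (2 * m + 1)%nat with (S (2 * m)) by lia. rewrite pow_1_odd. ring.
Qed.

Lemma center_of_odd n a : (0 < n)%nat -> Nat.Even n -> (forall i, Nat.Even i -> a i = 0) ->
  abel_center (fun t => t ^ (n - 1)) (poly_eval a 5).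
Proof.
  intros Hn He Ha.
  assert (Hg : forall t, (- t) ^ (n - 1) = - t ^ (n - 1)).
  { intros t. apply odd_pow_opp. destruct He as [m Hm]. exists (m - 1)%nat. lia. }
  assert (Hf : forall t, poly_eval a 5 (- t) = - poly_eval a 5 t).
  { intros t. unfold poly_eval; simpl.
    rewrite (Ha 0%nat), (Ha 2%nat), (Ha 4%nat); try (exists 0%nat; lia); try (exists 1%nat; lia); try (exists 2%nat; lia).
    ring. }
  exists (1 / (64 * (1 + Asum a))). pose proof (Asum_pos a). split.
  { apply Rdiv_lt_0_compat; lra. }
  intros x0 Hx. split.
  - destruct (exist_spec n a x0) as [psi [S [E _]]].
    { apply Rlt_le. apply Rmult_lt_reg_r with (/ (1 + Asum a)). apply Rinv_0_lt_compat; lra.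
      rewrite Rmult_assoc, Rinv_r, Rmult_1_r by lra.
      replace (1 / 64 * / (1 + Asum a)) with (1 / (64 * (1 + Asum a))) by (field; lra). auto. }
    exists psi; auto.
  - intros phi S E.
    pose proof (sym_sol (fun t => t ^ (n - 1)) (poly_eval a 5) phi Hg Hf S) as S'.
    pose proof (uniq01 (fun t => t ^ (n - 1)) (poly_eval a 5) 1 (Asum a) phi (fun t => phi (- t))) as U.
    rewrite <- E. replace (-1) with (- (1)) by ring. apply U; auto.
    intros; apply g_bound; auto. intros; apply f_bound; auto.
    rewrite Ropp_0; reflexivity.
Qed.

Lemma pointwise x p h q e1 A : 0 < x -> 0 <= A -> x * (1 + A) <= 1/18 ->
  Rabs (p - x) <= 9 * x ^ 2 -> Rabs h <= 1 -> Rabs q <= 2 * A -> Rabs e1 <= 18 * A * x ^ 2 ->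
  / p = / x - h + (e1 - x * q) ->
  Rabs (p - x - x ^ 2 * h - x ^ 3 * (h ^ 2 + q)) <= (27 * A + 12) * x ^ 4.
Proof.
  intros Hx HA Hs Hp Hh Hq He Hrel.
  assert (x1 : x <= 1/18) by nra. assert (x2 : A * x <= 1/18) by nra.
  apply abs_le_split in Hp.
  assert (p1 : x / 2 <= p) by nra. assert (p2 : p <= 3 * x / 2) by nra.
  set (v := e1 - x * q) in *.
  assert (Hv : Rabs v <= 3 * A * x).
  { unfold v. eapply Rle_trans. apply Rabs_triang. rewrite Rabs_Ropp, Rabs_mult, (Rabs_right x) by lra.
    assert (x * Rabs q <= x * (2 * A)) by (apply Rmult_le_compat_l; lra).
    assert (0 <= A * x * (1 - 18 * x)) by (apply Rmult_le_pos; [apply Rmult_le_pos|]; lra).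
    assert (18 * A * x ^ 2 <= A * x) by (simpl; lra). lra. }
  set (D := h - v).
  assert (HD : Rabs D <= 2).
  { unfold D. eapply Rle_trans. apply Rabs_triang. rewrite Rabs_Ropp. lra. }
  assert (Z : p - x - x * D * p = 0).
  { replace (p - x - x * D * p) with (x * p * (/ x - D - / p)) by (field; lra).
    unfold D. rewrite Hrel. ring. }
  assert (Eq : p - x - x ^ 2 * h - x ^ 3 * (h ^ 2 + q) =
     - (x ^ 2 * e1) + x ^ 3 * D ^ 3 * p - x ^ 3 * v * (2 * h - v)).
  { transitivity ((p - x - x * D * p) * (1 + x * D + x ^ 2 * D ^ 2) - x ^ 2 * e1 + x ^ 3 * D ^ 3 * p
      - x ^ 3 * v * (2 * h - v)). unfold D, v; ring. rewrite Z; ring. }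
  rewrite Eq.
  assert (T1 : Rabs (x ^ 2 * e1) <= 18 * A * x ^ 4).
  { rewrite Rabs_mult, (Rabs_right (x ^ 2)) by (apply Rle_ge, pow_le; lra).
    replace (18 * A * x ^ 4) with (x ^ 2 * (18 * A * x ^ 2)) by ring.
    apply Rmult_le_compat_l. apply pow_le; lra. auto. }
  assert (T2 : Rabs (x ^ 3 * D ^ 3 * p) <= 12 * x ^ 4).
  { rewrite !Rabs_mult, (Rabs_right (x ^ 3)) by (apply Rle_ge, pow_le; lra).
    rewrite (Rabs_right p) by lra. rewrite <- RPow_abs.
    pose proof (Rabs_pos D) as D0. set (d := Rabs D) in *.
    assert (d ^ 3 <= 8) by (simpl; nra).
    assert (0 <= d ^ 3) by (apply pow_le; lra).
    assert (0 < x ^ 3) by (apply pow_lt; lra).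
    replace (12 * x ^ 4) with (x ^ 3 * 8 * (3 * x / 2)) by (simpl; field).
    apply Rmult_le_compat. apply Rmult_le_pos; lra. lra.
    apply Rmult_le_compat_l; lra. lra. }
  assert (T3 : Rabs (x ^ 3 * v * (2 * h - v)) <= 9 * A * x ^ 4).
  { rewrite !Rabs_mult, (Rabs_right (x ^ 3)) by (apply Rle_ge, pow_le; lra).
    assert (Rabs (2 * h - v) <= 3).
    { eapply Rle_trans. apply Rabs_triang. rewrite Rabs_Ropp, Rabs_mult, (Rabs_right 2) by lra. nra. }
    pose proof (Rabs_pos v). pose proof (Rabs_pos (2 * h - v)).
    assert (0 < x ^ 3) by (apply pow_lt; lra).
    replace (9 * A * x ^ 4) with (x ^ 3 * (3 * A * x) * 3) by (simpl; ring).
    apply Rmult_le_compat. apply Rmult_le_pos; lra. lra.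
    apply Rmult_le_compat_l; lra. lra. }
  assert (Tr : forall a b c, Rabs (- a + b - c) <= Rabs a + Rabs b + Rabs c)
    by (intros; unfold Rabs; repeat destruct Rcase_abs; lra).
  eapply Rle_trans. apply Tr. lra.
Qed.

Ltac req := match goal with |- @eq _ ?a ?b => change (@eq R a b) end.

Lemma cR_plus (f g : R -> R) x : continuous f x -> continuous g x -> continuous (fun t => f t + g t) x.
Proof. intros; apply (continuous_plus (V := R_NormedModule) f g); auto. Qed.
Lemma cR_minus (f g : R -> R) x : continuous f x -> continuous g x -> continuous (fun t => f t - g t) x.
Proof. intros; apply (continuous_minus (K := R_AbsRing) (V := R_NormedModule) f g); auto. Qed.
Lemma cR_scal c (f : R -> R) x : continuous f x -> continuous (fun t => c * f t) x.
Proof. intros; apply (continuous_mult (U := R_UniformSpace) (K := R_AbsRing) (fun _ => c) f); auto. apply continuous_const. Qed.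
Lemma cR_const c (x : R) : @continuous R_UniformSpace R_UniformSpace (fun _ : R => c) x.
Proof. apply continuous_const. Qed.
Lemma cR_der (f : R -> R) x l : is_derive f x l -> continuous f x.
Proof. intros; apply (ex_derive_continuous (K := R_AbsRing) (V := R_NormedModule)). exists l; auto. Qed.

Lemma dR_plus (f g : R -> R) x a b : is_derive f x a -> is_derive g x b -> is_derive (fun t => f t + g t) x (a + b).
Proof. intros; apply (is_derive_plus f g); auto. Qed.
Lemma dR_minus (f g : R -> R) x a b : is_derive f x a -> is_derive g x b -> is_derive (fun t => f t - g t) x (a - b).
Proof. intros; apply (is_derive_minus f g); auto. Qed.
Lemma dR_scal c (f : R -> R) x a : is_derive f x a -> is_derive (fun t => c * f t) x (c * a).
Proof. intros; apply (is_derive_scal f); auto. Qed.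
Lemma dR_const c x : is_derive (fun _ : R => c) x 0.
Proof. apply (is_derive_const c). Qed.

Lemma expansion (g f G Q1 Q2 Q3 psi : R -> R) A x :
  (forall t, is_derive G t (g t)) -> G 1 = G (-1) ->
  (forall t, -1 <= t <= 1 -> Rabs (G t - G (-1)) <= 1) ->
  (forall t, -1 <= t <= 1 -> Rabs (f t) <= A) -> 0 <= A ->
  (forall t, is_derive Q1 t (f t)) ->
  (forall t, is_derive Q2 t (f t * (G t - G (-1)))) ->
  (forall t, is_derive Q3 t (f t * ((G t - G (-1)) ^ 2 + Q1 t))) ->
  Q1 (-1) = 0 -> Q2 (-1) = 0 -> Q3 (-1) = 0 ->
  abel_solution g f psi -> psi (-1) = x -> psi 1 = x ->
  (forall t, -1 <= t <= 1 -> Rabs (psi t - x) <= 9 * x ^ 2) ->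
  0 < x -> x * (1 + A) <= 1/18 ->
  Rabs (x * Q1 1 + x ^ 2 * Q2 1 + x ^ 3 * Q3 1) <= 2 * (A * ((27 * A + 12) * x ^ 4)).
Proof.
  intros DG G1 HGb Hf HA D1 D2 D3 Q10 Q20 Q30 [Cp Dp] Em1 E1 Bp Hx Hs.
  assert (x1 : x <= 1/18) by nra.
  set (pc := fun t => psi (clamp t)).
  assert (Cpc : forall t, continuous pc t) by (apply cont_clamp_of; auto).
  assert (Bpc : forall t, x / 2 <= pc t).
  { intros t. unfold pc. pose proof (Bp _ (clamp_in t)) as B. apply abs_le_split in B.
    assert (9 * x ^ 2 <= x / 2) by (simpl; nra). lra. }
  assert (Hnz : forall t, pc t <> 0) by (intros t; pose proof (Bpc t); lra).
  assert (CG : forall t, continuous G t) by (intros; eapply cR_der; eauto).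
  assert (CQ1 : forall t, continuous Q1 t) by (intros; eapply cR_der; eauto).
  assert (CQ2 : forall t, continuous Q2 t) by (intros; eapply cR_der; eauto).
  assert (CQ3 : forall t, continuous Q3 t) by (intros; eapply cR_der; eauto).
  assert (Q1b : forall t, -1 <= t <= 1 -> Rabs (Q1 t) <= 2 * A).
  { intros t Ht. pose proof (mvt_bound Q1 f (-1) t A ltac:(lra) CQ1 (fun x _ => D1 x)) as M.
    rewrite Q10, Rminus_0_r in M. eapply Rle_trans. apply M. intros; apply Hf; lra. nra. }
  set (v := fun t => / pc t + G t - / x - G (-1)).
  assert (Cv : forall t, continuous v t).
  { intros t. unfold v. apply cR_minus. apply cR_minus. apply cR_plus; auto.
    apply continuous_Rinv_comp; auto. apply cR_const. apply cR_const. }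
  assert (Dv : forall t, -1 < t < 1 -> is_derive v t (- f t * psi t)).
  { intros t Ht. unfold v.
    pose proof (is_derive_inv pc t _ (derive_clamp psi t _ Ht (Dp t Ht)) (Hnz t)) as Di.
    pose proof (dR_minus _ _ t _ _ (dR_minus _ _ t _ _ (dR_plus _ _ t _ _ Di (DG t)) (dR_const (/ x) t))
        (dR_const (G (-1)) t)) as Dt.
    eapply is_derive_val. apply Dt. unfold pc. rewrite clamp_id by lra.
    assert (psi t <> 0) by (pose proof (Hnz t) as Hn; unfold pc in Hn; rewrite clamp_id in Hn by lra; auto).
    assert (Eq : - (g t * psi t ^ 2 + f t * psi t ^ 3) / psi t ^ 2 + g t - 0 - 0 = - f t * psi t) by (field; auto). exact Eq. }
  assert (vm1 : v (-1) = 0).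
  { unfold v, pc. rewrite clamp_id by lra. rewrite Em1. ring. }
  assert (v1 : v 1 = 0).
  { unfold v, pc. rewrite clamp_id by lra. rewrite E1, G1. ring. }
  set (E1f := fun t => v t + x * Q1 t).
  assert (E1b : forall t, -1 <= t <= 1 -> Rabs (E1f t) <= 18 * A * x ^ 2).
  { intros t Ht.
    pose proof (mvt_bound E1f (fun s => - f s * (psi s - x)) (-1) t (9 * A * x ^ 2) ltac:(lra)) as M.
    unfold E1f in M |- *. rewrite vm1, Q10, Rmult_0_r, Rplus_0_r, Rminus_0_r in M.
    eapply Rle_trans. apply M.
    - intros s. apply cR_plus; auto. apply cR_scal; auto.
    - intros s Hs'. eapply is_derive_val. apply dR_plus. apply Dv; lra. apply dR_scal. apply D1. req; ring.
    - intros s Hs'. rewrite Rabs_mult, Rabs_Ropp.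
      assert (Rabs (f s) <= A) by (apply Hf; lra). assert (Rabs (psi s - x) <= 9 * x ^ 2) by (apply Bp; lra).
      replace (9 * A * x ^ 2) with (A * (9 * x ^ 2)) by ring.
      apply Rmult_le_compat; auto; apply Rabs_pos.
    - assert (0 <= 9 * A * x ^ 2) by (simpl; repeat apply Rmult_le_pos; lra). nra. }
  set (Ef := fun t => v t + x * Q1 t + x ^ 2 * Q2 t + x ^ 3 * Q3 t).
  pose proof (mvt_bound Ef (fun s => - f s * (psi s - x - x ^ 2 * (G s - G (-1)) - x ^ 3 * ((G s - G (-1)) ^ 2 + Q1 s)))
     (-1) 1 (A * ((27 * A + 12) * x ^ 4)) ltac:(lra)) as M.
  unfold Ef in M. rewrite vm1, v1, Q10, Q20, Q30 in M.
  replace (0 + x * Q1 1 + x ^ 2 * Q2 1 + x ^ 3 * Q3 1 - (0 + x * 0 + x ^ 2 * 0 + x ^ 3 * 0))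
    with (x * Q1 1 + x ^ 2 * Q2 1 + x ^ 3 * Q3 1) in M by ring.
  replace (2 * (A * ((27 * A + 12) * x ^ 4))) with (A * ((27 * A + 12) * x ^ 4) * (1 - -1)) by ring.
  apply M.
  - intros s. apply cR_plus. apply cR_plus. apply cR_plus; auto. apply cR_scal; auto.
    apply cR_scal; auto. apply cR_scal; auto.
  - intros s Hs'. eapply is_derive_val.
    apply dR_plus. apply dR_plus. apply dR_plus. apply Dv; lra.
    apply dR_scal. apply D1. apply dR_scal. apply D2. apply dR_scal. apply D3. req; ring.
  - intros s Hs'. rewrite Rabs_mult, Rabs_Ropp.
    assert (Rabs (f s) <= A) by (apply Hf; lra).
    assert (Rabs (psi s - x - x ^ 2 * (G s - G (-1)) - x ^ 3 * ((G s - G (-1)) ^ 2 + Q1 s))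
              <= (27 * A + 12) * x ^ 4).
    { apply (pointwise x (psi s) (G s - G (-1)) (Q1 s) (E1f s) A); auto.
      apply Bp; lra. apply HGb; lra. apply Q1b; lra. apply E1b; lra.
      unfold E1f, v, pc. rewrite clamp_id by lra. field. split; auto. lra.
      pose proof (Hnz s) as Hn; unfold pc in Hn; rewrite clamp_id in Hn by lra; auto. }
    apply Rmult_le_compat; auto; apply Rabs_pos.
Qed.

Lemma lin0 c B d : 0 < d -> (forall x, 0 < x < d -> Rabs c <= B * x) -> c = 0.
Proof.
  intros Hd H. destruct (Req_dec c 0) as [|Hc]; auto. exfalso.
  pose proof (Rabs_pos_lt c Hc) as Pc. pose proof (Rabs_pos B) as PB.
  set (x := Rmin (d / 2) (Rabs c / (2 * (Rabs B + 1)))).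
  assert (x0 : 0 < x) by (apply Rmin_glb_lt; apply Rdiv_lt_0_compat; lra).
  assert (x1 : x <= d / 2) by apply Rmin_l.
  assert (x2 : x <= Rabs c / (2 * (Rabs B + 1))) by apply Rmin_r.
  specialize (H x ltac:(lra)).
  assert (B * x <= Rabs B * x) by (apply Rmult_le_compat_r; [lra| apply RRle_abs]).
  assert (Rabs B * x <= Rabs B * (Rabs c / (2 * (Rabs B + 1)))) by (apply Rmult_le_compat_l; lra).
  assert (Rabs B * (Rabs c / (2 * (Rabs B + 1))) < Rabs c).
  { apply Rmult_lt_reg_r with (2 * (Rabs B + 1)). lra.
    replace (Rabs B * (Rabs c / (2 * (Rabs B + 1))) * (2 * (Rabs B + 1))) with (Rabs B * Rabs c) by (field; lra).
    nra. }
  lra.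
Qed.

Lemma powle x k m : 0 <= x <= 1 -> (m <= k)%nat -> x ^ k <= x ^ m.
Proof.
  intros Hx Hk. replace k with (m + (k - m))%nat by lia. rewrite pow_add.
  assert (Rabs (x ^ (k - m)) <= 1) by (apply pow_abs_le1; rewrite Rabs_right; lra).
  assert (0 <= x ^ (k - m)) by (apply pow_le; lra).
  assert (0 <= x ^ m) by (apply pow_le; lra).
  rewrite Rabs_right in H by lra. nra.
Qed.

Lemma coeffs al be ga K d : 0 < d ->
  (forall x, 0 < x < d -> Rabs (x * al + x ^ 2 * be + x ^ 3 * ga) <= K * x ^ 4) ->
  al = 0 /\ be = 0 /\ ga = 0.
Proof.
  intros Hd H.
  assert (d1 : 0 < Rmin d 1) by (apply Rmin_glb_lt; lra).
  pose proof (Rabs_pos K). pose proof (Rabs_pos be). pose proof (Rabs_pos ga).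
  assert (Ha : al = 0).
  { apply (lin0 al (Rabs K + Rabs be + Rabs ga) (Rmin d 1)); auto.
    intros x Hx. assert (x < d) by (pose proof (Rmin_l d 1); lra).
    assert (x < 1) by (pose proof (Rmin_r d 1); lra).
    specialize (H x ltac:(lra)).
    assert (Hr : Rabs (x * al) <= Rabs (x * al + x ^ 2 * be + x ^ 3 * ga) + Rabs (x ^ 2 * be) + Rabs (x ^ 3 * ga)).
    { unfold Rabs; repeat destruct Rcase_abs; lra. }
    rewrite !Rabs_mult, !(Rabs_right x), !(Rabs_right (x ^ 2)), !(Rabs_right (x ^ 3)) in Hr
      by (apply Rle_ge; try apply pow_le; lra).
    assert (x ^ 4 <= x ^ 2) by (apply powle; [lra|lia]).
    assert (K * x ^ 4 <= Rabs K * x ^ 4) by (apply Rmult_le_compat_r; [apply pow_le; lra| apply RRle_abs]).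
    assert (Rabs K * x ^ 4 <= Rabs K * x ^ 2) by (apply Rmult_le_compat_l; lra).
    assert (x ^ 3 <= x ^ 2) by (apply powle; [lra|lia]).
    assert (x ^ 3 * Rabs ga <= x ^ 2 * Rabs ga) by (apply Rmult_le_compat_r; lra).
    apply Rmult_le_reg_l with x. lra. simpl in *. nra. }
  subst al.
  assert (Hb : be = 0).
  { apply (lin0 be (Rabs K + Rabs ga) (Rmin d 1)); auto.
    intros x Hx. assert (x < d) by (pose proof (Rmin_l d 1); lra).
    assert (x < 1) by (pose proof (Rmin_r d 1); lra).
    specialize (H x ltac:(lra)).
    assert (Hr : Rabs (x ^ 2 * be) <= Rabs (x * 0 + x ^ 2 * be + x ^ 3 * ga) + Rabs (x ^ 3 * ga)).
    { unfold Rabs; repeat destruct Rcase_abs; lra. }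
    rewrite !Rabs_mult, !(Rabs_right (x ^ 2)), !(Rabs_right (x ^ 3)) in Hr
      by (apply Rle_ge; try apply pow_le; lra).
    assert (x ^ 4 <= x ^ 3) by (apply powle; [lra|lia]).
    assert (K * x ^ 4 <= Rabs K * x ^ 4) by (apply Rmult_le_compat_r; [apply pow_le; lra| apply RRle_abs]).
    assert (Rabs K * x ^ 4 <= Rabs K * x ^ 3) by (apply Rmult_le_compat_l; lra).
    assert (0 < x ^ 2) by (apply pow_lt; lra).
    apply Rmult_le_reg_l with (x ^ 2). auto. simpl in *. nra. }
  subst be. split; auto. split; auto.
  apply (lin0 ga (Rabs K) d); auto.
  intros x Hx. specialize (H x Hx).
  replace (x * 0 + x ^ 2 * 0 + x ^ 3 * ga) with (x ^ 3 * ga) in H by ring.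
  rewrite Rabs_mult, (Rabs_right (x ^ 3)) in H by (apply Rle_ge, pow_le; lra).
  assert (0 < x ^ 3) by (apply pow_lt; lra).
  assert (K * x ^ 4 <= Rabs K * x ^ 4) by (apply Rmult_le_compat_r; [apply pow_le; lra| apply RRle_abs]).
  apply Rmult_le_reg_l with (x ^ 3). auto. simpl in *. nra.
Qed.

Lemma solve3 a0 a2 a4 y1 y2 : 0 < y1 -> y1 < y2 ->
  a0 + a2 / 3 + a4 / 5 = 0 ->
  a0 / (y1 + 1) + a2 / (y1 + 3) + a4 / (y1 + 5) = 0 ->
  a0 / (y2 + 1) + a2 / (y2 + 3) + a4 / (y2 + 5) = 0 ->
  a0 = 0 /\ a2 = 0 /\ a4 = 0.
Proof.
  intros H1 H2 E0 E1 E2.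
  assert (F : forall y, 0 < y -> a0 / (y + 1) + a2 / (y + 3) + a4 / (y + 5) = 0 ->
             5 * a2 * (y + 5) + 6 * a4 * (y + 3) = 0).
  { intros y Hy Ey.
    assert (a0 = - a2 / 3 - a4 / 5) by lra. subst a0.
    assert (Z : (5 * a2 * (y + 5) + 6 * a4 * (y + 3)) * (2 * y / (15 * (y + 1) * (y + 3) * (y + 5))) = 0).
    { rewrite <- Ey. field. lra. }
    apply Rmult_integral in Z. destruct Z as [Z|Z]; auto.
    exfalso. assert (0 < 2 * y / (15 * (y + 1) * (y + 3) * (y + 5))).
    { apply Rdiv_lt_0_compat. lra. apply Rmult_lt_0_compat. apply Rmult_lt_0_compat. apply Rmult_lt_0_compat. all: lra. }
    lra. }
  pose proof (F y1 H1 E1). pose proof (F y2 ltac:(lra) E2).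
  assert ((y2 - y1) * (5 * a2 + 6 * a4) = 0) by lra.
  apply Rmult_integral in H3. destruct H3 as [H3|H3]. lra.
  assert (a4 = 0) by nra. assert (a2 = 0) by lra. repeat split; lra.
Qed.

Definition mono (a : nat -> R) (i m : nat) (t : R) : R :=
  a i * (t ^ (i + m + 1) - (-1) ^ (i + m + 1)) / INR (i + m + 1).

Definition Am (a : nat -> R) (m : nat) (t : R) : R := sum_f_R0 (fun i => mono a i m t) 5.

Lemma INR_Sn_neq0 k : INR (S k) <> 0.
Proof. apply not_0_INR; lia. Qed.

Lemma mono_derive a i m t : is_derive (mono a i m) t (a i * t ^ (i + m)).
Proof.
  assert (Hk : INR (i + m + 1) <> 0) by (replace (i + m + 1)%nat with (S (i + m)) by lia; apply INR_Sn_neq0).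
  pose proof (is_derive_pow (fun t => t) (i + m + 1) t 1 (is_derive_id t)) as D1.
  pose proof (dR_scal (a i / INR (i + m + 1)) _ t _
               (dR_minus _ _ t _ _ D1 (dR_const ((-1) ^ (i + m + 1)) t))) as D2.
  eapply is_derive_ext. 2: eapply is_derive_val. 2: apply D2.
  - intros s. unfold mono. simpl. field. auto.
  - replace (Init.Nat.pred (i + m + 1)) with (i + m)%nat by lia. req. field. auto.
Qed.

Lemma sum_derive (F : nat -> R -> R) (dF : nat -> R -> R) N t :
  (forall i, is_derive (F i) t (dF i t)) ->
  is_derive (fun s => sum_f_R0 (fun i => F i s) N) t (sum_f_R0 (fun i => dF i t) N).
Proof.
  intros HF. induction N. simpl. apply HF.
  simpl. apply dR_plus; auto.
Qed.

Lemma Am_derive a m t : is_derive (Am a m) t (t ^ m * poly_eval a 5 t).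
Proof.
  unfold Am. eapply is_derive_val. apply (sum_derive (fun i => mono a i m) (fun i s => a i * s ^ (i + m))).
  intros; apply mono_derive.
  unfold poly_eval. simpl. req. ring.
Qed.

Lemma Am_m1 a m : Am a m (-1) = 0.
Proof. unfold Am, mono. simpl. rewrite !Rminus_diag. unfold Rdiv. ring. Qed.

Lemma mono_one_ev a i m : Nat.Even m -> Nat.Even i -> mono a i m 1 = 2 * a i / (INR i + INR m + 1).
Proof.
  intros [q Hq] [j Hj]. unfold mono. rewrite pow1.
  replace (i + m + 1)%nat with (S (2 * (j + q))) by lia. rewrite pow_1_odd.
  replace (S (2 * (j + q))) with (i + m + 1)%nat by lia. rewrite !plus_INR. simpl. unfold Rdiv. ring.
Qed.

Lemma mono_one_od a i m : Nat.Even m -> Nat.Odd i -> mono a i m 1 = 0.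
Proof.
  intros [q Hq] [j Hj]. unfold mono. rewrite pow1.
  replace (i + m + 1)%nat with (2 * (j + q + 1))%nat by lia. rewrite pow_1_even.
  unfold Rdiv. ring.
Qed.

Lemma Am_one a m : Nat.Even m ->
  Am a m 1 = 2 * (a 0%nat / (INR m + 1) + a 2%nat / (INR m + 3) + a 4%nat / (INR m + 5)).
Proof.
  intros Hm. unfold Am. simpl.
  rewrite (mono_one_ev a 0 m), (mono_one_ev a 2 m), (mono_one_ev a 4 m),
    (mono_one_od a 1 m), (mono_one_od a 3 m), (mono_one_od a 5 m); auto;
    try (exists 0%nat; lia); try (exists 1%nat; lia); try (exists 2%nat; lia).
  simpl. replace (1 + 1 + INR m + 1) with (INR m + 3) by ring.
  replace (1 + 1 + 1 + 1 + INR m + 1) with (INR m + 5) by ring.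
  replace (0 + INR m + 1) with (INR m + 1) by ring. unfold Rdiv. ring.
Qed.

Lemma necessity (n : nat) (a : nat -> R) :
  (0 < n)%nat -> Nat.Even n ->
  abel_center (fun t => t ^ (n - 1)) (poly_eval a 5) ->
  a 0%nat = 0 /\ a 2%nat = 0 /\ a 4%nat = 0.
Proof.
  intros Hn He [eps [Heps C]].
  pose proof He as [p0 Hp0].
  pose proof (Asum_pos a) as A0. set (A := Asum a) in *.
  set (N := INR n).
  assert (N2 : 2 <= N) by (unfold N; replace 2 with (INR 2) by (simpl; ring); apply le_INR; lia).
  assert (Nnz : N <> 0) by lra.
  assert (m1n : (-1) ^ n = 1) by (rewrite Hp0; apply pow_1_even).
  set (G := fun t => / N * t ^ n).
  set (Q1 := Am a 0).
  set (Q2 := fun t => / N * (Am a n t - Am a 0 t)).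
  set (Q3 := fun t => / N ^ 2 * (Am a (2 * n) t - 2 * Am a n t + Am a 0 t) + / 2 * (Am a 0 t) ^ 2).
  assert (DG : forall t, is_derive G t (t ^ (n - 1))).
  { intros t. eapply is_derive_val. apply dR_scal.
    apply (is_derive_pow (fun t => t) n t 1 (is_derive_id t)).
    replace (Init.Nat.pred n) with (n - 1)%nat by lia. req. unfold N. field. fold N; auto. }
  assert (G1 : G 1 = G (-1)) by (unfold G; rewrite pow1, m1n; auto).
  assert (HGb : forall t, -1 <= t <= 1 -> Rabs (G t - G (-1)) <= 1).
  { intros t Ht. unfold G. rewrite m1n.
    replace (/ N * t ^ n - / N * 1) with (/ N * (t ^ n - 1)) by ring.
    rewrite Rabs_mult, Rabs_right by (apply Rle_ge, Rlt_le, Rinv_0_lt_compat; lra).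
    pose proof (g_bound n t Ht).
    assert (Rabs (t ^ n - 1) <= 2) by (unfold Rabs in *; repeat destruct Rcase_abs; lra).
    assert (/ N <= / 2) by (apply Rinv_le_contravar; lra).
    assert (0 < / N) by (apply Rinv_0_lt_compat; lra).
    pose proof (Rabs_pos (t ^ n - 1)). nra. }
  assert (D1 : forall t, is_derive Q1 t (poly_eval a 5 t)).
  { intros t. eapply is_derive_val. apply Am_derive. req. simpl; ring. }
  assert (D2 : forall t, is_derive Q2 t (poly_eval a 5 t * (G t - G (-1)))).
  { intros t. eapply is_derive_val. apply dR_scal. apply dR_minus; apply Am_derive.
    req. unfold G. rewrite m1n. simpl. ring. }
  assert (D3 : forall t, is_derive Q3 t (poly_eval a 5 t * ((G t - G (-1)) ^ 2 + Q1 t))).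
  { intros t. eapply is_derive_val. apply dR_plus. apply dR_scal. apply dR_plus. apply dR_minus.
    apply Am_derive. apply dR_scal. apply Am_derive. apply Am_derive.
    apply dR_scal. apply (is_derive_pow (Am a 0)). apply Am_derive.
    req. unfold G, Q1. rewrite m1n.
    replace (t ^ (2 * n)) with ((t ^ n) ^ 2) by (rewrite <- pow_mult; f_equal; lia).
    simpl. field. auto. }
  assert (Q10 : Q1 (-1) = 0) by apply Am_m1.
  assert (Q20 : Q2 (-1) = 0) by (unfold Q2; rewrite !Am_m1; ring).
  assert (Q30 : Q3 (-1) = 0) by (unfold Q3; rewrite !Am_m1; ring).
  set (d := Rmin eps (1 / (64 * (1 + A)))).
  assert (d0 : 0 < d) by (apply Rmin_glb_lt; auto; apply Rdiv_lt_0_compat; lra).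
  assert (Key : forall x, 0 < x < d ->
     Rabs (x * Q1 1 + x ^ 2 * Q2 1 + x ^ 3 * Q3 1) <= (2 * A * (27 * A + 12)) * x ^ 4).
  { intros x Hx.
    assert (xe : x < eps) by (pose proof (Rmin_l eps (1 / (64 * (1 + A)))); fold d in H; lra).
    assert (xs : x * (1 + A) <= 1 / 64).
    { pose proof (Rmin_r eps (1 / (64 * (1 + A)))) as H. fold d in H.
      assert (x <= 1 / (64 * (1 + A))) by lra.
      apply Rmult_le_reg_r with (/ (1 + A)). apply Rinv_0_lt_compat; lra.
      rewrite Rmult_assoc, Rinv_r, Rmult_1_r by lra.
      replace (1 / 64 * / (1 + A)) with (1 / (64 * (1 + A))) by (field; lra). auto. }
    destruct (exist_spec n a x) as [psi [S [E B]]].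
    { rewrite Rabs_right by lra. auto. }
    assert (Ex1 : psi 1 = x).
    { destruct (C x) as [_ C2]. rewrite Rabs_right; lra. apply C2; auto. }
    replace (2 * A * (27 * A + 12) * x ^ 4) with (2 * (A * ((27 * A + 12) * x ^ 4))) by ring.
    apply (expansion (fun t => t ^ (n - 1)) (poly_eval a 5) G Q1 Q2 Q3 psi A x); auto.
    intros; apply f_bound; auto. lra. lra. }
  destruct (coeffs _ _ _ _ _ d0 Key) as [Z1 [Z2 Z3]].
  assert (Ev0 : Nat.Even 0) by (exists 0%nat; lia).
  assert (Ev2n : Nat.Even (2 * n)) by (exists n; lia).
  assert (S0 : Am a 0 1 = 0) by exact Z1.
  assert (S1 : Am a n 1 = 0).
  { unfold Q2 in Z2. rewrite S0, Rminus_0_r in Z2. apply Rmult_integral in Z2.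
    destruct Z2 as [Z|Z]; auto. exfalso. apply (Rinv_neq_0_compat N); auto. }
  assert (S2 : Am a (2 * n) 1 = 0).
  { unfold Q3 in Z3. rewrite S0, S1 in Z3.
    replace (/ N ^ 2 * (Am a (2 * n) 1 - 2 * 0 + 0) + / 2 * 0 ^ 2) with (/ N ^ 2 * Am a (2 * n) 1) in Z3 by ring.
    apply Rmult_integral in Z3. destruct Z3 as [Z|Z]; auto. exfalso.
    apply (Rinv_neq_0_compat (N ^ 2)). apply pow_nonzero; auto. auto. }
  rewrite Am_one in S0, S1, S2 by auto.
  rewrite mult_INR in S2. fold N in S1, S2. simpl (INR 0) in S0. simpl (INR 2) in S2.
  apply (solve3 (a 0%nat) (a 2%nat) (a 4%nat) N ((1 + 1) * N)); try lra.
Qed.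

Theorem corollary1 (n : nat) (a : nat -> R) :
  (0 < n)%nat -> Nat.Even n ->
  (forall i : nat, (5 < i)%nat -> a i = 0) ->
  (abel_center (fun t => t ^ (n - 1)) (poly_eval a 5)
   <-> (forall i : nat, Nat.Even i -> a i = 0)).
Proof.
  intros Hn He Hbig. split.
  - intros Hc. destruct (necessity n a Hn He Hc) as [Z0 [Z2 Z4]].
    intros i Hi. destruct (le_lt_dec i 5) as [Hle|Hlt].
    + destruct i as [|[|[|[|[|[|i]]]]]]; auto;
        try (exfalso; destruct Hi as [k Hk]; lia).
    + apply Hbig; lia.
  - apply center_of_odd; auto.
Qed.
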